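(* The zero points of $\mathbf B$ on the unit sphere are exactly the two critical points of $U^\ast$ outside the equator circle $z=0$, namely the physical centers $\hat{\mathbf p}_0^\pm$ (the shapes of the regular, i.e. equilateral, triangle) on the hemispheres $z>0$ and $z<0$.
   Context: Masses $m_1,m_2,m_3>0$, $m_1+m_2+m_3=1$; $\hat m_1=m_2m_3$, $\hat m_2=m_3m_1$, $\hat m_3=m_1m_2$. The shape sphere (oriented m-triangles modulo rotation with $\sum m_i|\mathbf a_i|^2=1$, with kinematic metric, magnified by factor 2) is identified with the unit sphere $S^2\subset\mathbb R^3$, with the equator $z=0$ the collinear shapes, and $\hat{\mathbf b}_1,\hat{\mathbf b}_2,\hat{\mathbf b}_3$ the unit vectors on the equator representing the binary collision shapes $\mathbf a_2=\mathbf a_3$, $\mathbf a_3=\mathbf a_1$, $\mathbf a_1=\mathbf a_2$. In this picture the Newtonian potential $U=\sum_{i<j}m_im_j/|\mathbf a_i-\mathbf a_j|$ restricted to unit size is $U^\ast(\mathbf p)=\sum_{i=1}^3\frac{k_i}{|\mathbf p-\hat{\mathbf b}_i|}$ with $k_i=\frac{2\hat m_i^{3/2}}{\sqrt{1-m_i}}$, and $\mathbf B(\mathbf p)=\sum_{i=1}^3\frac{k_i\hat{\mathbf b}_i}{|\mathbf p-\hat{\mathbf b}_i|^3}\in\mathbb R^2\times\{0\}$ for $\mathbf p\in S^2$. *)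

(* Defs.v *)
From Stdlib Require Import Reals.
Open Scope R_scope.

Record V3 := mkV3 { vx : R; vy : R; vz : R }.

Definition vadd (p q : V3) : V3 := mkV3 (vx p + vx q) (vy p + vy q) (vz p + vz q).
Definition vsub (p q : V3) : V3 := mkV3 (vx p - vx q) (vy p - vy q) (vz p - vz q).
Definition vscale (a : R) (p : V3) : V3 := mkV3 (a * vx p) (a * vy p) (a * vz p).
Definition dot (p q : V3) : R := vx p * vx q + vy p * vy q + vz p * vz q.
Definition vnorm (p : V3) : R := sqrt (dot p p).
Definition vzero : V3 := mkV3 0 0 0.

Definition on_sphere (p : V3) : Prop := dot p p = 1.

Record Config := mkConfig
  { ax1 : R; ay1 : R; ax2 : R; ay2 : R; ax3 : R; ay3 : R }.

Definition normalized (m1 m2 m3 : R) (c : Config) : Prop :=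
  m1 * ax1 c + m2 * ax2 c + m3 * ax3 c = 0 /\
  m1 * ay1 c + m2 * ay2 c + m3 * ay3 c = 0 /\
  m1 * (ax1 c ^ 2 + ay1 c ^ 2) + m2 * (ax2 c ^ 2 + ay2 c ^ 2)
    + m3 * (ax3 c ^ 2 + ay3 c ^ 2) = 1.

(* The shape map to the unit sphere (Hopf map in mass-orthonormal Jacobi
   coordinates; kinematic metric magnified by 2).  With the real
   mass-orthonormal basis
     e1 = t (1-m1, -m1, -m1),  t = 1/sqrt(m1(1-m1)),
     e2 = s (0, m3, -m2),       s = 1/sqrt(m2 m3 (1-m1)),
   and complex coordinates z_j = sum_i m_i a_i (e_j)_i, the shape is
     (|z1|^2-|z2|^2, 2 Re(z1 conj z2), 2 Im(z1 conj z2)).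
   Collinear shapes are exactly those with third coordinate 0. *)
Definition shape (m1 m2 m3 : R) (c : Config) : V3 :=
  let t := / sqrt (m1 * (1 - m1)) in
  let s := / sqrt (m2 * m3 * (1 - m1)) in
  let e11 := t * (1 - m1) in let e12 := - (t * m1) in let e13 := - (t * m1) in
  let e21 := 0 in let e22 := s * m3 in let e23 := - (s * m2) in
  let z1r := m1 * ax1 c * e11 + m2 * ax2 c * e12 + m3 * ax3 c * e13 in
  let z1i := m1 * ay1 c * e11 + m2 * ay2 c * e12 + m3 * ay3 c * e13 in
  let z2r := m1 * ax1 c * e21 + m2 * ax2 c * e22 + m3 * ax3 c * e23 in
  let z2i := m1 * ay1 c * e21 + m2 * ay2 c * e22 + m3 * ay3 c * e23 in
  mkV3 (z1r ^ 2 + z1i ^ 2 - z2r ^ 2 - z2i ^ 2)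
       (2 * (z1r * z2r + z1i * z2i))
       (2 * (z1i * z2r - z1r * z2i)).

(* Normalized binary collision configurations (collinear, on the x-axis):
   a_j = a_k = -m_i tau, a_i = (1-m_i) tau, tau = 1/sqrt(m_i (1-m_i)). *)
Definition coll1 (m1 m2 m3 : R) : Config :=
  let tau := / sqrt (m1 * (1 - m1)) in
  mkConfig ((1 - m1) * tau) 0 (- (m1 * tau)) 0 (- (m1 * tau)) 0.
Definition coll2 (m1 m2 m3 : R) : Config :=
  let tau := / sqrt (m2 * (1 - m2)) in
  mkConfig (- (m2 * tau)) 0 ((1 - m2) * tau) 0 (- (m2 * tau)) 0.
Definition coll3 (m1 m2 m3 : R) : Config :=
  let tau := / sqrt (m3 * (1 - m3)) in
  mkConfig (- (m3 * tau)) 0 (- (m3 * tau)) 0 ((1 - m3) * tau) 0.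

Definition bhat1 (m1 m2 m3 : R) : V3 := shape m1 m2 m3 (coll1 m1 m2 m3).
Definition bhat2 (m1 m2 m3 : R) : V3 := shape m1 m2 m3 (coll2 m1 m2 m3).
Definition bhat3 (m1 m2 m3 : R) : V3 := shape m1 m2 m3 (coll3 m1 m2 m3).

Definition kcoef (mi mhat : R) : R := 2 * (mhat * sqrt mhat) / sqrt (1 - mi).
Definition k1 (m1 m2 m3 : R) : R := kcoef m1 (m2 * m3).
Definition k2 (m1 m2 m3 : R) : R := kcoef m2 (m3 * m1).
Definition k3 (m1 m2 m3 : R) : R := kcoef m3 (m1 * m2).

Definition Ustar (m1 m2 m3 : R) (p : V3) : R :=
  k1 m1 m2 m3 / vnorm (vsub p (bhat1 m1 m2 m3))
  + k2 m1 m2 m3 / vnorm (vsub p (bhat2 m1 m2 m3))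
  + k3 m1 m2 m3 / vnorm (vsub p (bhat3 m1 m2 m3)).

Definition Bvec (m1 m2 m3 : R) (p : V3) : V3 :=
  vadd (vscale (k1 m1 m2 m3 / vnorm (vsub p (bhat1 m1 m2 m3)) ^ 3) (bhat1 m1 m2 m3))
  (vadd (vscale (k2 m1 m2 m3 / vnorm (vsub p (bhat2 m1 m2 m3)) ^ 3) (bhat2 m1 m2 m3))
        (vscale (k3 m1 m2 m3 / vnorm (vsub p (bhat3 m1 m2 m3)) ^ 3) (bhat3 m1 m2 m3))).

(* p is a critical point of f restricted to the unit sphere: the derivative
   of f along every unit-speed great circle through p vanishes at p. *)
Definition sphere_critical (f : V3 -> R) (p : V3) : Prop :=
  forall v : V3, dot v p = 0 -> dot v v = 1 ->
    derivable_pt_lim (fun t => f (vadd (vscale (cos t) p) (vscale (sin t) v))) 0 0.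

Definition equilateral (c : Config) : Prop :=
  (ax1 c - ax2 c) ^ 2 + (ay1 c - ay2 c) ^ 2 = (ax2 c - ax3 c) ^ 2 + (ay2 c - ay3 c) ^ 2 /\
  (ax2 c - ax3 c) ^ 2 + (ay2 c - ay3 c) ^ 2 = (ax3 c - ax1 c) ^ 2 + (ay3 c - ay1 c) ^ 2.

Definition equilateral_shape (m1 m2 m3 : R) (p : V3) : Prop :=
  exists c : Config, normalized m1 m2 m3 c /\ equilateral c /\ shape m1 m2 m3 c = p.

(* Main.v *)
Require Import Defs.
From Stdlib Require Import Reals Lra Psatz.
Open Scope R_scope.

Lemma L_bil m1 m2 m3 x1 x2 x3 y1 y2 y3 :
  m1 + m2 + m3 = 1 -> m1*x1+m2*x2+m3*x3 = 0 -> m1*y1+m2*y2+m3*y3 = 0 ->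
  (1-m1)*(m1*x1*y1+m2*x2*y2+m3*x3*y3) = m1*x1*y1 + m2*m3*((x2-x3)*(y2-y3)).
Proof.
  intros hm hx hy.
  assert (E : (1-m1)*(m1*x1*y1+m2*x2*y2+m3*x3*y3) - (m1*x1*y1 + m2*m3*((x2-x3)*(y2-y3)))
    = (m1*x1+m2*x2+m3*x3)*(m1*y1+m2*y2+m3*y3) - (m1*x1+m2*x2+m3*x3)*(m1*y1)
      - (m1*x1)*(m1*y1+m2*y2+m3*y3) + (1 - m1 - m2 - m3)*(m1*x1*y1 + m2*x2*y2+m3*x3*y3 - m1*x1*y1)).
  { ring. }
  rewrite hx, hy in E. replace (1 - m1 - m2 - m3) with 0 in E by lra. lra.
Qed.

Definition COM (m1 m2 m3 : R) (c : Config) : Prop :=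
  m1*ax1 c + m2*ax2 c + m3*ax3 c = 0 /\ m1*ay1 c + m2*ay2 c + m3*ay3 c = 0.

Definition Gd (m1 m2 m3 : R) (c c' : Config) : R :=
  m1*(ax1 c*ax1 c' + ay1 c*ay1 c') + m2*(ax2 c*ax2 c' + ay2 c*ay2 c')
  + m3*(ax3 c*ax3 c' + ay3 c*ay3 c').
Definition Hd (m1 m2 m3 : R) (c c' : Config) : R :=
  m1*(ay1 c*ax1 c' - ax1 c*ay1 c') + m2*(ay2 c*ax2 c' - ax2 c*ay2 c')
  + m3*(ay3 c*ax3 c' - ax3 c*ay3 c').

Lemma shape_form m1 m2 m3 c : COM m1 m2 m3 c ->
  let t := / sqrt (m1 * (1 - m1)) in
  let s := / sqrt (m2 * m3 * (1 - m1)) in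
  let z1r := t*m1*ax1 c in let z1i := t*m1*ay1 c in
  let z2r := s*(m2*m3)*(ax2 c - ax3 c) in let z2i := s*(m2*m3)*(ay2 c - ay3 c) in
  shape m1 m2 m3 c = mkV3 (z1r ^ 2 + z1i ^ 2 - z2r ^ 2 - z2i ^ 2)
       (2 * (z1r * z2r + z1i * z2i))
       (2 * (z1i * z2r - z1r * z2i)).
Proof.
  intros [hx hy] t s z1r z1i z2r z2i.
  unfold shape. cbv zeta. fold t s.
  assert (E : forall X1 X2 X3, m1*X1*(t*(1-m1)) + m2*X2*(-(t*m1)) + m3*X3*(-(t*m1))
     = t*m1*X1 - t*m1*(m1*X1+m2*X2+m3*X3)) by (intros; ring).
  assert (E2 : forall X1 X2 X3, m1*X1*0 + m2*X2*(s*m3) + m3*X3*(-(s*m2))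
     = s*(m2*m3)*(X2-X3)) by (intros; ring).
  repeat rewrite E; repeat rewrite E2; rewrite hx, hy. unfold z1r, z1i, z2r, z2i. f_equal; ring.
Qed.

Lemma inv_sqrt_sq x : 0 < x -> / sqrt x * / sqrt x = / x.
Proof.
  intros hx. rewrite <- Rinv_mult, sqrt_sqrt; lra.
Qed.

Lemma L_dot m1 m2 m3 c c' :
  0 < m1 -> 0 < m2 -> 0 < m3 -> m1 + m2 + m3 = 1 ->
  COM m1 m2 m3 c -> COM m1 m2 m3 c' ->
  dot (shape m1 m2 m3 c) (shape m1 m2 m3 c') =
  2 * (Gd m1 m2 m3 c c' ^ 2 + Hd m1 m2 m3 c c' ^ 2) - Gd m1 m2 m3 c c * Gd m1 m2 m3 c' c'.
Proof.
  intros h1 h2 h3 hm hc hc'.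
  assert (Hg : forall d d', COM m1 m2 m3 d -> COM m1 m2 m3 d' ->
    let t := / sqrt (m1 * (1 - m1)) in
    let s := / sqrt (m2 * m3 * (1 - m1)) in
    (t*m1*ax1 d)*(t*m1*ax1 d') + (t*m1*ay1 d)*(t*m1*ay1 d')
    + (s*(m2*m3)*(ax2 d - ax3 d))*(s*(m2*m3)*(ax2 d' - ax3 d'))
    + (s*(m2*m3)*(ay2 d - ay3 d))*(s*(m2*m3)*(ay2 d' - ay3 d')) = Gd m1 m2 m3 d d'
    /\
    (t*m1*ay1 d)*(t*m1*ax1 d') - (t*m1*ax1 d)*(t*m1*ay1 d')
    + (s*(m2*m3)*(ay2 d - ay3 d))*(s*(m2*m3)*(ax2 d' - ax3 d'))
    - (s*(m2*m3)*(ax2 d - ax3 d))*(s*(m2*m3)*(ay2 d' - ay3 d')) = Hd m1 m2 m3 d d').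
  { intros d d' [dx dy] [dx' dy'] t s.
    assert (ht : t * t = / (m1 * (1 - m1))) by (apply inv_sqrt_sq; nra).
    assert (hs : s * s = / (m2 * m3 * (1 - m1))) by (apply inv_sqrt_sq;
      assert (0 < m2*m3) by nra; nra).
    assert (m1 < 1) by lra.
    split.
    - pose proof (L_bil m1 m2 m3 _ _ _ _ _ _ hm dx dx') as B1.
      pose proof (L_bil m1 m2 m3 _ _ _ _ _ _ hm dy dy') as B2.
      transitivity ((t*t)*(m1*m1)*(ax1 d*ax1 d' + ay1 d * ay1 d')
         + (s*s)*((m2*m3)*(m2*m3))*((ax2 d - ax3 d)*(ax2 d' - ax3 d') + (ay2 d - ay3 d)*(ay2 d' - ay3 d'))).
      { ring. }
      rewrite ht, hs. apply Rmult_eq_reg_l with (1 - m1); [| lra].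
      unfold Gd.
      replace ((1 - m1) * (m1 * (ax1 d * ax1 d' + ay1 d * ay1 d') + m2 * (ax2 d * ax2 d' + ay2 d * ay2 d') +
         m3 * (ax3 d * ax3 d' + ay3 d * ay3 d'))) with
        ((1-m1)*(m1*ax1 d*ax1 d'+m2*ax2 d*ax2 d'+m3*ax3 d*ax3 d') + 
         (1-m1)*(m1*ay1 d*ay1 d'+m2*ay2 d*ay2 d'+m3*ay3 d*ay3 d')) by ring.
      rewrite B1, B2. field. split; [lra|]. split; nra.
    - pose proof (L_bil m1 m2 m3 _ _ _ _ _ _ hm dy dx') as B1.
      pose proof (L_bil m1 m2 m3 _ _ _ _ _ _ hm dx dy') as B2.
      transitivity ((t*t)*(m1*m1)*(ay1 d*ax1 d' - ax1 d * ay1 d')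
         + (s*s)*((m2*m3)*(m2*m3))*((ay2 d - ay3 d)*(ax2 d' - ax3 d') - (ax2 d - ax3 d)*(ay2 d' - ay3 d'))).
      { ring. }
      rewrite ht, hs. apply Rmult_eq_reg_l with (1 - m1); [| lra].
      unfold Hd.
      replace ((1 - m1) * (m1 * (ay1 d * ax1 d' - ax1 d * ay1 d') + m2 * (ay2 d * ax2 d' - ax2 d * ay2 d') +
         m3 * (ay3 d * ax3 d' - ax3 d * ay3 d'))) with
        ((1-m1)*(m1*ay1 d*ax1 d'+m2*ay2 d*ax2 d'+m3*ay3 d*ax3 d') -
         (1-m1)*(m1*ax1 d*ay1 d'+m2*ax2 d*ay2 d'+m3*ax3 d*ay3 d')) by ring.
      rewrite B1, B2. field. split; [lra|]. split; nra. }
  destruct (Hg c c' hc hc') as [G1 H1].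
  destruct (Hg c c hc hc) as [G2 _].
  destruct (Hg c' c' hc' hc') as [G3 _].
  rewrite (shape_form _ _ _ c hc), (shape_form _ _ _ c' hc').
  cbv zeta. rewrite <- G1, <- H1, <- G2, <- G3. unfold dot; simpl. ring.
Qed.

Definition Nrm (m1 m2 m3 : R) (c : Config) : R :=
  m1 * (ax1 c ^ 2 + ay1 c ^ 2) + m2 * (ax2 c ^ 2 + ay2 c ^ 2) + m3 * (ax3 c ^ 2 + ay3 c ^ 2).

Lemma Gd_self m1 m2 m3 c : Gd m1 m2 m3 c c = Nrm m1 m2 m3 c.
Proof. unfold Gd, Nrm; ring. Qed.
Lemma Hd_self m1 m2 m3 c : Hd m1 m2 m3 c c = 0.
Proof. unfold Hd; ring. Qed.

Lemma norm_COM m1 m2 m3 c : normalized m1 m2 m3 c -> COM m1 m2 m3 c /\ Nrm m1 m2 m3 c = 1.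
Proof. intros [h1 [h2 h3]]. split; [split; assumption| exact h3]. Qed.

Lemma L_sphere m1 m2 m3 c :
  0 < m1 -> 0 < m2 -> 0 < m3 -> m1 + m2 + m3 = 1 -> COM m1 m2 m3 c ->
  dot (shape m1 m2 m3 c) (shape m1 m2 m3 c) = Nrm m1 m2 m3 c ^ 2.
Proof.
  intros. rewrite L_dot by assumption. rewrite Gd_self, Hd_self. ring.
Qed.

Lemma tau_sq m : 0 < m < 1 -> / sqrt (m * (1 - m)) * / sqrt (m * (1 - m)) = / (m * (1 - m)).
Proof. intros. apply inv_sqrt_sq. nra. Qed.

Lemma coll1_ok m1 m2 m3 : 0 < m1 -> 0 < m2 -> 0 < m3 -> m1 + m2 + m3 = 1 ->
  COM m1 m2 m3 (coll1 m1 m2 m3) /\ Nrm m1 m2 m3 (coll1 m1 m2 m3) = 1.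
Proof.
  intros. unfold COM, Nrm, coll1; simpl.
  pose proof (tau_sq m1 ltac:(lra)) as ht.
  set (t := / sqrt (m1 * (1 - m1))) in *. clearbody t.
  assert (Em : m1 = 1 - m2 - m3) by lra. rewrite Em in *.
  split; [split; ring|].
  transitivity ((t*t)*((1-m2-m3)*(1-(1-m2-m3)))); [ring|].
  rewrite ht. field. nra.
Qed.

Lemma coll2_ok m1 m2 m3 : 0 < m1 -> 0 < m2 -> 0 < m3 -> m1 + m2 + m3 = 1 ->
  COM m1 m2 m3 (coll2 m1 m2 m3) /\ Nrm m1 m2 m3 (coll2 m1 m2 m3) = 1.
Proof.
  intros. unfold COM, Nrm, coll2; simpl.
  pose proof (tau_sq m2 ltac:(lra)) as ht.
  set (t := / sqrt (m2 * (1 - m2))) in *. clearbody t.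
  assert (Em : m2 = 1 - m1 - m3) by lra. rewrite Em in *.
  split; [split; ring|].
  transitivity ((t*t)*((1-m1-m3)*(1-(1-m1-m3)))); [ring|].
  rewrite ht. field. nra.
Qed.

Lemma coll3_ok m1 m2 m3 : 0 < m1 -> 0 < m2 -> 0 < m3 -> m1 + m2 + m3 = 1 ->
  COM m1 m2 m3 (coll3 m1 m2 m3) /\ Nrm m1 m2 m3 (coll3 m1 m2 m3) = 1.
Proof.
  intros. unfold COM, Nrm, coll3; simpl.
  pose proof (tau_sq m3 ltac:(lra)) as ht.
  set (t := / sqrt (m3 * (1 - m3))) in *. clearbody t.
  assert (Em : m3 = 1 - m1 - m2) by lra. rewrite Em in *.
  split; [split; ring|].
  transitivity ((t*t)*((1-m1-m2)*(1-(1-m1-m2)))); [ring|].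
  rewrite ht. field. nra.
Qed.

Lemma dot_sub p b : dot (vsub p b) (vsub p b) = dot p p - 2 * dot p b + dot b b.
Proof. destruct p, b; unfold dot, vsub; simpl; ring. Qed.

Lemma dist_fin mi mj mk A r2 tau G H : 0 < mi < 1 ->
  tau * tau = / (mi * (1 - mi)) -> G ^ 2 + H ^ 2 = tau * tau * (mi * mi) * A ->
  (1 - mi) = mi * A + mj * mk * r2 ->
  4 - 4 * (G ^ 2 + H ^ 2) = 4 * (mj * mk) / (1 - mi) * r2.
Proof.
  intros hm ht hGH hr. rewrite hGH, ht.
  replace (4 * (mj * mk) / (1 - mi) * r2) with (4 * (mj * mk * r2) / (1 - mi)) by (field; lra).
  replace (mj * mk * r2) with (1 - mi - mi * A) by lra.
  field. lra.
Qed.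

Lemma dist_gen m1 m2 m3 c cc : 0 < m1 -> 0 < m2 -> 0 < m3 -> m1 + m2 + m3 = 1 ->
  normalized m1 m2 m3 c -> COM m1 m2 m3 cc -> Nrm m1 m2 m3 cc = 1 ->
  dot (vsub (shape m1 m2 m3 c) (shape m1 m2 m3 cc)) (vsub (shape m1 m2 m3 c) (shape m1 m2 m3 cc))
  = 4 - 4 * (Gd m1 m2 m3 c cc ^ 2 + Hd m1 m2 m3 c cc ^ 2).
Proof.
  intros h1 h2 h3 hm hn hc hN. apply norm_COM in hn. destruct hn as [hc0 hN0].
  rewrite dot_sub, (L_sphere _ _ _ c), (L_sphere _ _ _ cc), L_dot by assumption.
  rewrite Gd_self, Gd_self, hN, hN0. ring.
Qed.

Lemma dist1 m1 m2 m3 c : 0 < m1 -> 0 < m2 -> 0 < m3 -> m1 + m2 + m3 = 1 ->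
  normalized m1 m2 m3 c ->
  dot (vsub (shape m1 m2 m3 c) (bhat1 m1 m2 m3)) (vsub (shape m1 m2 m3 c) (bhat1 m1 m2 m3))
  = 4 * (m2 * m3) / (1 - m1) * ((ax2 c - ax3 c) ^ 2 + (ay2 c - ay3 c) ^ 2).
Proof.
  intros h1 h2 h3 hm hn. unfold bhat1.
  destruct (coll1_ok m1 m2 m3 h1 h2 h3 hm) as [hc hN].
  rewrite dist_gen by assumption.
  pose proof hn as hn'. apply norm_COM in hn'. destruct hn' as [[hx hy] hN0].
  apply dist_fin with (tau := / sqrt (m1 * (1 - m1))) (A := ax1 c ^ 2 + ay1 c ^ 2).
  - lra.
  - apply tau_sq; lra.
  - unfold Gd, Hd, coll1; simpl.
    set (t := / sqrt (m1 * (1 - m1))).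
    replace (m1 * (ax1 c * ((1 - m1) * t) + ay1 c * 0) + m2 * (ax2 c * - (m1 * t) + ay2 c * 0) +
      m3 * (ax3 c * - (m1 * t) + ay3 c * 0)) with (t*m1*ax1 c - t*m1*(m1*ax1 c + m2*ax2 c + m3*ax3 c)) by ring.
    replace (m1 * (ay1 c * ((1 - m1) * t) - ax1 c * 0) + m2 * (ay2 c * - (m1 * t) - ax2 c * 0) +
      m3 * (ay3 c * - (m1 * t) - ax3 c * 0)) with (t*m1*ay1 c - t*m1*(m1*ay1 c + m2*ay2 c + m3*ay3 c)) by ring.
    rewrite hx, hy. ring.
  - pose proof (L_bil m1 m2 m3 _ _ _ _ _ _ hm hx hx) as B1.
    pose proof (L_bil m1 m2 m3 _ _ _ _ _ _ hm hy hy) as B2.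
    unfold Nrm in hN0. nra.
Qed.

Lemma dist2 m1 m2 m3 c : 0 < m1 -> 0 < m2 -> 0 < m3 -> m1 + m2 + m3 = 1 ->
  normalized m1 m2 m3 c ->
  dot (vsub (shape m1 m2 m3 c) (bhat2 m1 m2 m3)) (vsub (shape m1 m2 m3 c) (bhat2 m1 m2 m3))
  = 4 * (m3 * m1) / (1 - m2) * ((ax1 c - ax3 c) ^ 2 + (ay1 c - ay3 c) ^ 2).
Proof.
  intros h1 h2 h3 hm hn. unfold bhat2.
  destruct (coll2_ok m1 m2 m3 h1 h2 h3 hm) as [hc hN].
  rewrite dist_gen by assumption.
  pose proof hn as hn'. apply norm_COM in hn'. destruct hn' as [[hx hy] hN0].
  apply dist_fin with (tau := / sqrt (m2 * (1 - m2))) (A := ax2 c ^ 2 + ay2 c ^ 2).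
  - lra.
  - apply tau_sq; lra.
  - assert (EG : Gd m1 m2 m3 c (coll2 m1 m2 m3) = / sqrt (m2 * (1 - m2)) * m2 * ax2 c).
    { unfold Gd, coll2; simpl.
      transitivity (/ sqrt (m2 * (1 - m2)) * m2 * ax2 c - / sqrt (m2 * (1 - m2)) * m2 * (m1*ax1 c + m2*ax2 c + m3*ax3 c)); [ring| rewrite hx; ring]. }
    assert (EH : Hd m1 m2 m3 c (coll2 m1 m2 m3) = / sqrt (m2 * (1 - m2)) * m2 * ay2 c).
    { unfold Hd, coll2; simpl.
      transitivity (/ sqrt (m2 * (1 - m2)) * m2 * ay2 c - / sqrt (m2 * (1 - m2)) * m2 * (m1*ay1 c + m2*ay2 c + m3*ay3 c)); [ring| rewrite hy; ring]. }
    rewrite EG, EH. ring.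
  - assert (hm' : m2 + m1 + m3 = 1) by lra.
    assert (hx' : m2 * ax2 c + m1 * ax1 c + m3 * ax3 c = 0) by lra.
    assert (hy' : m2 * ay2 c + m1 * ay1 c + m3 * ay3 c = 0) by lra.
    pose proof (L_bil m2 m1 m3 _ _ _ _ _ _ hm' hx' hx') as B1.
    pose proof (L_bil m2 m1 m3 _ _ _ _ _ _ hm' hy' hy') as B2.
    unfold Nrm in hN0. nra.
Qed.

Lemma dist3 m1 m2 m3 c : 0 < m1 -> 0 < m2 -> 0 < m3 -> m1 + m2 + m3 = 1 ->
  normalized m1 m2 m3 c ->
  dot (vsub (shape m1 m2 m3 c) (bhat3 m1 m2 m3)) (vsub (shape m1 m2 m3 c) (bhat3 m1 m2 m3))
  = 4 * (m1 * m2) / (1 - m3) * ((ax1 c - ax2 c) ^ 2 + (ay1 c - ay2 c) ^ 2).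
Proof.
  intros h1 h2 h3 hm hn. unfold bhat3.
  destruct (coll3_ok m1 m2 m3 h1 h2 h3 hm) as [hc hN].
  rewrite dist_gen by assumption.
  pose proof hn as hn'. apply norm_COM in hn'. destruct hn' as [[hx hy] hN0].
  apply dist_fin with (tau := / sqrt (m3 * (1 - m3))) (A := ax3 c ^ 2 + ay3 c ^ 2).
  - lra.
  - apply tau_sq; lra.
  - assert (EG : Gd m1 m2 m3 c (coll3 m1 m2 m3) = / sqrt (m3 * (1 - m3)) * m3 * ax3 c).
    { unfold Gd, coll3; simpl.
      transitivity (/ sqrt (m3 * (1 - m3)) * m3 * ax3 c - / sqrt (m3 * (1 - m3)) * m3 * (m1*ax1 c + m2*ax2 c + m3*ax3 c)); [ring| rewrite hx; ring]. }
    assert (EH : Hd m1 m2 m3 c (coll3 m1 m2 m3) = / sqrt (m3 * (1 - m3)) * m3 * ay3 c).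
    { unfold Hd, coll3; simpl.
      transitivity (/ sqrt (m3 * (1 - m3)) * m3 * ay3 c - / sqrt (m3 * (1 - m3)) * m3 * (m1*ay1 c + m2*ay2 c + m3*ay3 c)); [ring| rewrite hy; ring]. }
    rewrite EG, EH. ring.
  - assert (hm' : m3 + m1 + m2 = 1) by lra.
    assert (hx' : m3 * ax3 c + m1 * ax1 c + m2 * ax2 c = 0) by lra.
    assert (hy' : m3 * ay3 c + m1 * ay1 c + m2 * ay2 c = 0) by lra.
    pose proof (L_bil m3 m1 m2 _ _ _ _ _ _ hm' hx' hx') as B1.
    pose proof (L_bil m3 m1 m2 _ _ _ _ _ _ hm' hy' hy') as B2.
    unfold Nrm in hN0. nra.
Qed.

Lemma bhat1_eq m1 m2 m3 : 0 < m1 -> 0 < m2 -> 0 < m3 -> m1 + m2 + m3 = 1 ->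
  bhat1 m1 m2 m3 = mkV3 1 0 0.
Proof.
  intros h1 h2 h3 hm. unfold bhat1.
  destruct (coll1_ok m1 m2 m3 h1 h2 h3 hm) as [hc _].
  rewrite shape_form by exact hc. cbv zeta. unfold coll1; simpl.
  pose proof (tau_sq m1 ltac:(lra)) as ht.
  set (t := / sqrt (m1 * (1 - m1))) in *. clearbody t.
  f_equal; try ring.
  transitivity ((t*t)*(t*t)*((m1*(1-m1))*(m1*(1-m1)))); [ring|].
  rewrite ht. field. nra.
Qed.

Lemma bhat2_eq m1 m2 m3 : 0 < m1 -> 0 < m2 -> 0 < m3 -> m1 + m2 + m3 = 1 ->
  bhat2 m1 m2 m3 = mkV3 ((m1*m2-m3)/((1-m1)*(1-m2)))
    (-2 * (/ sqrt (m1 * (1 - m1)) * / sqrt (m2 * m3 * (1 - m1))) * (m1*m2*m3) / (1-m2)) 0.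
Proof.
  intros h1 h2 h3 hm. unfold bhat2.
  destruct (coll2_ok m1 m2 m3 h1 h2 h3 hm) as [hc _].
  rewrite shape_form by exact hc. cbv zeta. unfold coll2; simpl.
  pose proof (tau_sq m1 ltac:(lra)) as ht.
  pose proof (tau_sq m2 ltac:(lra)) as hu.
  assert (hs : / sqrt (m2 * m3 * (1 - m1)) * / sqrt (m2 * m3 * (1 - m1)) = / (m2 * m3 * (1 - m1)))
    by (apply inv_sqrt_sq; assert (0 < m2 * m3) by nra; nra).
  set (t := / sqrt (m1 * (1 - m1))) in *. clearbody t.
  set (s := / sqrt (m2 * m3 * (1 - m1))) in *. clearbody s.
  set (u := / sqrt (m2 * (1 - m2))) in *. clearbody u.
  assert (m1 < 1) by lra. assert (m2 < 1) by lra. assert (0 < m2*m3) by nra.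
  f_equal; try ring.
  - transitivity ((t*t)*(u*u)*(m1*m1*m2*m2) - (s*s)*(u*u)*((m2*m3)*(m2*m3))*((1-m2+m2)*(1-m2+m2))); [ring|].
    rewrite ht, hu, hs. field. repeat split; lra.
  - transitivity (-2 * (t*s) * (u*u) * (m1*m2*(m2*m3)*(1-m2+m2))); [ring|].
    rewrite hu. field. lra.
Qed.

Lemma bhat3_eq m1 m2 m3 : 0 < m1 -> 0 < m2 -> 0 < m3 -> m1 + m2 + m3 = 1 ->
  bhat3 m1 m2 m3 = mkV3 ((m1*m3-m2)/((1-m1)*(1-m3)))
    (2 * (/ sqrt (m1 * (1 - m1)) * / sqrt (m2 * m3 * (1 - m1))) * (m1*m2*m3) / (1-m3)) 0.
Proof.
  intros h1 h2 h3 hm. unfold bhat3.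
  destruct (coll3_ok m1 m2 m3 h1 h2 h3 hm) as [hc _].
  rewrite shape_form by exact hc. cbv zeta. unfold coll3; simpl.
  pose proof (tau_sq m1 ltac:(lra)) as ht.
  pose proof (tau_sq m3 ltac:(lra)) as hu.
  assert (hs : / sqrt (m2 * m3 * (1 - m1)) * / sqrt (m2 * m3 * (1 - m1)) = / (m2 * m3 * (1 - m1)))
    by (apply inv_sqrt_sq; assert (0 < m2 * m3) by nra; nra).
  set (t := / sqrt (m1 * (1 - m1))) in *. clearbody t.
  set (s := / sqrt (m2 * m3 * (1 - m1))) in *. clearbody s.
  set (u := / sqrt (m3 * (1 - m3))) in *. clearbody u.
  assert (m1 < 1) by lra. assert (m3 < 1) by lra. assert (0 < m2*m3) by nra.
  f_equal; try ring.
  - transitivity ((t*t)*(u*u)*(m1*m1*m3*m3) - (s*s)*(u*u)*((m2*m3)*(m2*m3))*((m3+1-m3)*(m3+1-m3))); [ring|].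
    rewrite ht, hu, hs. field. repeat split; lra.
  - transitivity (2 * (t*s) * (u*u) * (m1*m3*(m2*m3)*(m3+1-m3))); [ring|].
    rewrite hu. field. lra.
Qed.

Lemma bhat_facts m1 m2 m3 : 0 < m1 -> 0 < m2 -> 0 < m3 -> m1 + m2 + m3 = 1 ->
  exists X2 Y2 X3 Y3,
    bhat1 m1 m2 m3 = mkV3 1 0 0 /\ bhat2 m1 m2 m3 = mkV3 X2 Y2 0 /\
    bhat3 m1 m2 m3 = mkV3 X3 Y3 0 /\ Y2 <> 0 /\
    (1 - m1) + (1 - m2) * X2 + (1 - m3) * X3 = 0 /\
    (1 - m2) * Y2 + (1 - m3) * Y3 = 0.
Proof.
  intros h1 h2 h3 hm.
  rewrite bhat1_eq, bhat2_eq, bhat3_eq by assumption.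
  eexists _, _, _, _. split; [reflexivity|]. split; [reflexivity|]. split; [reflexivity|].
  assert (0 < / sqrt (m1 * (1 - m1))).
  { apply Rinv_0_lt_compat, sqrt_lt_R0. nra. }
  assert (0 < / sqrt (m2 * m3 * (1 - m1))).
  { apply Rinv_0_lt_compat, sqrt_lt_R0. assert (0 < m2*m3) by nra. nra. }
  assert (0 < m1*m2*m3) by (assert (0 < m1*m2) by nra; nra).
  assert (m1 < 1) by lra. assert (m2 < 1) by lra. assert (m3 < 1) by lra.
  split; [|split].
  - apply Rlt_not_eq. unfold Rdiv.
    assert (0 < / (1 - m2)) by (apply Rinv_0_lt_compat; lra).
    assert (0 < (/ sqrt (m1 * (1 - m1)) * / sqrt (m2 * m3 * (1 - m1)))) by nra.
    assert (0 < (/ sqrt (m1 * (1 - m1)) * / sqrt (m2 * m3 * (1 - m1))) * (m1*m2*m3) * / (1 - m2)) by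
      (apply Rmult_lt_0_compat; [nra|lra]).
    nra.
  - replace ((1 - m1) + (1 - m2) * ((m1 * m2 - m3) / ((1 - m1) * (1 - m2))) +
      (1 - m3) * ((m1 * m3 - m2) / ((1 - m1) * (1 - m3)))) with
      (((1-m1)*(1-m1) + m1*m2 - m3 + m1*m3 - m2)/(1-m1)) by (field; lra).
    replace ((1-m1)*(1-m1) + m1*m2 - m3 + m1*m3 - m2) with 0.
    + unfold Rdiv; ring.
    + replace m1 with (1 - m2 - m3) by lra. ring.
  - set (a := / sqrt (m1 * (1 - m1))). set (b := / sqrt (m2 * m3 * (1 - m1))).
    clearbody a b. field. lra.
Qed.

Definition Rd (p b : V3) : R := dot (vsub p b) (vsub p b).
Definition Eq3 (m1 m2 m3 : R) (p : V3) : Prop :=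
  Rd p (bhat1 m1 m2 m3) / (4 * (m2 * m3) / (1 - m1)) = Rd p (bhat2 m1 m2 m3) / (4 * (m3 * m1) / (1 - m2)) /\
  Rd p (bhat2 m1 m2 m3) / (4 * (m3 * m1) / (1 - m2)) = Rd p (bhat3 m1 m2 m3) / (4 * (m1 * m2) / (1 - m3)).

Lemma surj m1 m2 m3 p : 0 < m1 -> 0 < m2 -> 0 < m3 -> m1 + m2 + m3 = 1 ->
  on_sphere p -> exists c, normalized m1 m2 m3 c /\ shape m1 m2 m3 c = p.
Proof.
  intros h1 h2 h3 hm hp. unfold on_sphere, dot in hp.
  destruct p as [px py pz]; simpl in hp.
  destruct (Req_dec px 1) as [e|ne].
  - subst px. assert (py = 0) by nra. assert (pz = 0) by nra. subst.
    exists (coll1 m1 m2 m3). destruct (coll1_ok m1 m2 m3 h1 h2 h3 hm) as [[cx cy] cN].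
    split; [split; [exact cx| split; [exact cy| exact cN]]|].
    change (shape m1 m2 m3 (coll1 m1 m2 m3)) with (bhat1 m1 m2 m3).
    apply bhat1_eq; assumption.
  - assert (hlt : px < 1) by nra.
    set (w := sqrt ((1 - px) / 2)).
    assert (hw : 0 < w) by (apply sqrt_lt_R0; lra).
    assert (hw2 : w * w = (1 - px) / 2) by (apply sqrt_sqrt; lra).
    set (zr := py / (2 * w)). set (zi := pz / (2 * w)).
    set (t := / sqrt (m1 * (1 - m1))).
    set (s := / sqrt (m2 * m3 * (1 - m1))).
    assert (ht : t * t = / (m1 * (1 - m1))) by (apply tau_sq; lra).
    assert (hs : s * s = / (m2 * m3 * (1 - m1)))
      by (apply inv_sqrt_sq; assert (0 < m2 * m3) by nra; nra).
    set (c := mkConfig (zr * (t * (1 - m1))) (zi * (t * (1 - m1)))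
                       (- (zr * (t * m1)) + w * (s * m3)) (- (zi * (t * m1)))
                       (- (zr * (t * m1)) - w * (s * m2)) (- (zi * (t * m1)))).
    assert (hc : COM m1 m2 m3 c).
    { unfold COM, c; simpl. split.
      - transitivity (zr * t * m1 * (1 - (m1 + m2 + m3))); [ring| rewrite hm; ring].
      - transitivity (zi * t * m1 * (1 - (m1 + m2 + m3))); [ring| rewrite hm; ring]. }
    assert (m1 < 1) by lra. assert (0 < m2 * m3) by nra.
    assert (hsh : shape m1 m2 m3 c = mkV3 px py pz).
    { rewrite shape_form by exact hc. cbv zeta. fold t s. unfold c; simpl.
      assert (E1 : t * m1 * (zr * (t * (1 - m1))) = zr).
      { transitivity (zr * (t * t) * (m1 * (1 - m1))); [ring|]. rewrite ht. field. nra. }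
      assert (E2 : t * m1 * (zi * (t * (1 - m1))) = zi).
      { transitivity (zi * (t * t) * (m1 * (1 - m1))); [ring|]. rewrite ht. field. nra. }
      assert (E3 : s * (m2 * m3) * (- (zr * (t * m1)) + w * (s * m3) - (- (zr * (t * m1)) - w * (s * m2))) = w).
      { transitivity (w * (s * s) * (m2 * m3 * (m2 + m3))); [ring|].
        replace (m2 + m3) with (1 - m1) by lra. rewrite hs. field. nra. }
      assert (E4 : s * (m2 * m3) * (- (zi * (t * m1)) - - (zi * (t * m1))) = 0) by ring.
      rewrite E1, E2, E3, E4. unfold zr, zi. f_equal.
      - apply Rmult_eq_reg_l with (4 * (w * w)); [| nra].
        field_simplify; [| lra].
        replace (w ^ 4) with ((w * w) * (w * w)) by ring.
        replace (w ^ 2) with (w * w) by ring. rewrite hw2.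
        replace (py ^ 2 + pz ^ 2) with (1 - px * px) by nra. nra.
      - field. lra.
      - field. lra. }
    exists c. split; [| exact hsh].
    destruct hc as [cx cy]. split; [exact cx| split; [exact cy|]].
    pose proof (L_sphere m1 m2 m3 c h1 h2 h3 hm (conj cx cy)) as hS.
    rewrite hsh in hS. unfold dot in hS; simpl in hS.
    assert (hN0 : 0 <= Nrm m1 m2 m3 c).
    { unfold Nrm. assert (0 <= ax1 c ^ 2 + ay1 c ^ 2) by nra.
      assert (0 <= ax2 c ^ 2 + ay2 c ^ 2) by nra. assert (0 <= ax3 c ^ 2 + ay3 c ^ 2) by nra. nra. }
    fold (Nrm m1 m2 m3 c). nra.
Qed.

Lemma Rd_div m1 m2 m3 c : 0 < m1 -> 0 < m2 -> 0 < m3 -> m1 + m2 + m3 = 1 ->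
  normalized m1 m2 m3 c ->
  Rd (shape m1 m2 m3 c) (bhat1 m1 m2 m3) / (4 * (m2 * m3) / (1 - m1)) = (ax2 c - ax3 c) ^ 2 + (ay2 c - ay3 c) ^ 2 /\
  Rd (shape m1 m2 m3 c) (bhat2 m1 m2 m3) / (4 * (m3 * m1) / (1 - m2)) = (ax1 c - ax3 c) ^ 2 + (ay1 c - ay3 c) ^ 2 /\
  Rd (shape m1 m2 m3 c) (bhat3 m1 m2 m3) / (4 * (m1 * m2) / (1 - m3)) = (ax1 c - ax2 c) ^ 2 + (ay1 c - ay2 c) ^ 2.
Proof.
  intros h1 h2 h3 hm hn. unfold Rd.
  rewrite dist1, dist2, dist3 by assumption.
  assert (0 < m1 * m2) by nra. assert (0 < m2 * m3) by nra. assert (0 < m3 * m1) by nra.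
  split; [|split]; field; repeat split; lra.
Qed.

Lemma eqshape_iff m1 m2 m3 p : 0 < m1 -> 0 < m2 -> 0 < m3 -> m1 + m2 + m3 = 1 ->
  (equilateral_shape m1 m2 m3 p <-> on_sphere p /\ Eq3 m1 m2 m3 p).
Proof.
  intros h1 h2 h3 hm. split.
  - intros [c [hn [he hs]]]. subst p.
    destruct (Rd_div m1 m2 m3 c h1 h2 h3 hm hn) as [e1 [e2 e3]].
    split.
    + unfold on_sphere. apply norm_COM in hn. destruct hn as [hc hN].
      rewrite L_sphere by assumption. rewrite hN. ring.
    + unfold Eq3. rewrite e1, e2, e3. destruct he as [q1 q2].
      split; nra.
  - intros [hp hE]. destruct (surj m1 m2 m3 p h1 h2 h3 hm hp) as [c [hn hs]].
    exists c. split; [exact hn|]. split; [|exact hs]. subst p.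
    destruct (Rd_div m1 m2 m3 c h1 h2 h3 hm hn) as [e1 [e2 e3]].
    unfold Eq3 in hE. rewrite e1, e2, e3 in hE. destruct hE as [q1 q2].
    unfold equilateral. split; nra.
Qed.

Lemma Rd_pos p b : p <> b -> 0 < Rd p b.
Proof.
  intros hne. destruct p as [x y z], b as [a b c]. unfold Rd, dot, vsub; simpl.
  destruct (Req_dec x a); destruct (Req_dec y b); destruct (Req_dec z c); subst;
  try (exfalso; apply hne; reflexivity); try nra.
  all: assert (0 < (x - a) * (x - a)) by (apply Rmult_lt_0_compat || nra; nra); nra.
Qed.

Lemma QP mi mh R k : 0 < mi < 1 -> 0 < mh -> 0 < R -> k = kcoef mi mh ->
  ((k / sqrt R ^ 3) / (1 - mi)) ^ 2 * (R / (4 * mh / (1 - mi))) ^ 3 = 1 / 16.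
Proof.
  intros hi hh hR hk. subst k. unfold kcoef.
  assert (ha : sqrt mh * sqrt mh = mh) by (apply sqrt_sqrt; lra).
  assert (hb : sqrt (1 - mi) * sqrt (1 - mi) = 1 - mi) by (apply sqrt_sqrt; lra).
  assert (hr : sqrt R * sqrt R = R) by (apply sqrt_sqrt; lra).
  assert (0 < sqrt mh) by (apply sqrt_lt_R0; lra).
  assert (0 < sqrt (1 - mi)) by (apply sqrt_lt_R0; lra).
  assert (0 < sqrt R) by (apply sqrt_lt_R0; lra).
  set (a := sqrt mh) in *. set (b := sqrt (1 - mi)) in *. set (r := sqrt R) in *.
  clearbody a b r. rewrite <- ha, <- hb, <- hr. field. lra.
Qed.

Lemma pos_sq_inj x y : 0 < x -> 0 < y -> x ^ 2 = y ^ 2 -> x = y.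
Proof. intros. nra. Qed.

Lemma pos_cube_inj x y : 0 < x -> 0 < y -> x ^ 3 = y ^ 3 -> x = y.
Proof.
  intros hx hy h.
  assert (e : (x - y) * (x * x + x * y + y * y) = 0) by (rewrite <- (Rminus_diag_eq _ _ h); ring).
  apply Rmult_integral in e. destruct e as [e|e]; nra.
Qed.

Lemma QP_iff Qi Qj Pi Pj : 0 < Qi -> 0 < Qj -> 0 < Pi -> 0 < Pj ->
  Qi ^ 2 * Pi ^ 3 = 1 / 16 -> Qj ^ 2 * Pj ^ 3 = 1 / 16 -> (Qi = Qj <-> Pi = Pj).
Proof.
  intros hqi hqj hpi hpj ei ej. split; intros e.
  - subst Qj. apply pos_cube_inj; try assumption.
    assert (0 < Qi ^ 2) by (apply pow_lt; lra).
    apply Rmult_eq_reg_l with (Qi ^ 2); lra.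
  - subst Pj. apply pos_sq_inj; try assumption.
    assert (0 < Pi ^ 3) by (apply pow_lt; lra).
    apply Rmult_eq_reg_r with (Pi ^ 3); lra.
Qed.

Lemma kcoef_pos mi mh : 0 < mi < 1 -> 0 < mh -> 0 < kcoef mi mh.
Proof.
  intros. unfold kcoef.
  assert (0 < sqrt mh) by (apply sqrt_lt_R0; lra).
  assert (0 < sqrt (1 - mi)) by (apply sqrt_lt_R0; lra).
  apply Rdiv_lt_0_compat; nra.
Qed.

Lemma lin_iff w1 w2 w3 m1 m2 m3 X2 Y2 X3 Y3 :
  m1 < 1 -> m2 < 1 -> m3 < 1 -> Y2 <> 0 ->
  (1 - m1) + (1 - m2) * X2 + (1 - m3) * X3 = 0 ->
  (1 - m2) * Y2 + (1 - m3) * Y3 = 0 ->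
  (w1 * 1 + (w2 * X2 + w3 * X3) = 0 /\ w1 * 0 + (w2 * Y2 + w3 * Y3) = 0 <->
   w1 / (1 - m1) = w2 / (1 - m2) /\ w2 / (1 - m2) = w3 / (1 - m3)).
Proof.
  intros l1 l2 l3 hY hX hYs. split.
  - intros [ex ey].
    assert (e23 : w2 * (1 - m3) = w3 * (1 - m2)).
    { assert (Y2 * (w2 * (1 - m3) - w3 * (1 - m2)) = 0).
      { replace (Y2 * (w2 * (1 - m3) - w3 * (1 - m2))) with
          ((1 - m3) * (w2 * Y2 + w3 * Y3) - w3 * ((1 - m2) * Y2 + (1 - m3) * Y3)) by ring.
        assert (ey' : w2 * Y2 + w3 * Y3 = 0) by (rewrite <- ey; ring).
        rewrite ey', hYs. ring. }
      apply Rmult_integral in H. destruct H; [contradiction|lra]. }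
    assert (e13 : w1 * (1 - m3) = w3 * (1 - m1)).
    { replace (w1 * (1 - m3)) with ((1 - m3) * (w1 * 1 + (w2 * X2 + w3 * X3)) - X2 * (w2 * (1 - m3)) - w3 * (1 - m3) * X3) by ring.
      rewrite e23, ex.
      replace (w3 * (1 - m1)) with (w3 * ((1 - m1) + (1 - m2) * X2 + (1 - m3) * X3) - X2 * (w3 * (1 - m2)) - w3 * (1 - m3) * X3) by ring.
      rewrite hX. ring. }
    split; apply Rmult_eq_reg_r with ((1 - m1) * (1 - m2) * (1 - m3));
      try (apply Rgt_not_eq, Rmult_lt_0_compat; [apply Rmult_lt_0_compat|]; lra).
    + replace (w1 / (1 - m1) * ((1 - m1) * (1 - m2) * (1 - m3))) with ((w1 * (1 - m3)) * (1 - m2)) by (field; lra).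
      replace (w2 / (1 - m2) * ((1 - m1) * (1 - m2) * (1 - m3))) with ((w2 * (1 - m3)) * (1 - m1)) by (field; lra).
      rewrite e13, e23. ring.
    + replace (w2 / (1 - m2) * ((1 - m1) * (1 - m2) * (1 - m3))) with ((w2 * (1 - m3)) * (1 - m1)) by (field; lra).
      replace (w3 / (1 - m3) * ((1 - m1) * (1 - m2) * (1 - m3))) with (w3 * (1 - m2) * (1 - m1)) by (field; lra).
      rewrite e23. ring.
  - intros [e1 e2]. set (l := w2 / (1 - m2)) in *.
    assert (hw1 : w1 = l * (1 - m1)) by (rewrite <- e1; field; lra).
    assert (hw2 : w2 = l * (1 - m2)) by (unfold l; field; lra).
    assert (hw3 : w3 = l * (1 - m3)) by (rewrite e2; field; lra).
    rewrite hw1, hw2, hw3. split.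
    + replace (l * (1 - m1) * 1 + (l * (1 - m2) * X2 + l * (1 - m3) * X3)) with
        (l * ((1 - m1) + (1 - m2) * X2 + (1 - m3) * X3)) by ring. rewrite hX; ring.
    + replace (l * (1 - m1) * 0 + (l * (1 - m2) * Y2 + l * (1 - m3) * Y3)) with
        (l * ((1 - m2) * Y2 + (1 - m3) * Y3)) by ring. rewrite hYs; ring.
Qed.

Lemma B_iff m1 m2 m3 p : 0 < m1 -> 0 < m2 -> 0 < m3 -> m1 + m2 + m3 = 1 ->
  p <> bhat1 m1 m2 m3 -> p <> bhat2 m1 m2 m3 -> p <> bhat3 m1 m2 m3 ->
  (Bvec m1 m2 m3 p = vzero <-> Eq3 m1 m2 m3 p).
Proof.
  intros h1 h2 h3 hm n1 n2 n3.
  destruct (bhat_facts m1 m2 m3 h1 h2 h3 hm) as [X2 [Y2 [X3 [Y3 [Eb1 [Eb2 [Eb3 [hY2 [hX hY]]]]]]]]].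
  pose proof (Rd_pos _ _ n1) as r1. pose proof (Rd_pos _ _ n2) as r2. pose proof (Rd_pos _ _ n3) as r3.
  assert (l1 : m1 < 1) by lra. assert (l2 : m2 < 1) by lra. assert (l3 : m3 < 1) by lra.
  assert (p12 : 0 < m1 * m2) by nra. assert (p23 : 0 < m2 * m3) by nra. assert (p31 : 0 < m3 * m1) by nra.
  assert (hv : forall b, vnorm (vsub p b) = sqrt (Rd p b)) by reflexivity.
  assert (hw : forall mi mh b, 0 < mi < 1 -> 0 < mh -> 0 < Rd p b ->
     0 < kcoef mi mh / vnorm (vsub p b) ^ 3 / (1 - mi) /\
     0 < Rd p b / (4 * mh / (1 - mi)) /\
     (kcoef mi mh / vnorm (vsub p b) ^ 3 / (1 - mi)) ^ 2 * (Rd p b / (4 * mh / (1 - mi))) ^ 3 = 1 / 16).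
  { intros mi mh b hi hh hR. rewrite hv. split; [|split].
    - pose proof (kcoef_pos mi mh hi hh).
      assert (0 < sqrt (Rd p b)) by (apply sqrt_lt_R0; lra).
      apply Rdiv_lt_0_compat; [apply Rdiv_lt_0_compat|]; try lra. apply pow_lt; lra.
    - apply Rdiv_lt_0_compat; [lra|]. apply Rdiv_lt_0_compat; lra.
    - apply QP; auto. }
  destruct (hw m1 (m2 * m3) _ ltac:(lra) p23 r1) as [q1 [pp1 e1]].
  destruct (hw m2 (m3 * m1) _ ltac:(lra) p31 r2) as [q2 [pp2 e2]].
  destruct (hw m3 (m1 * m2) _ ltac:(lra) p12 r3) as [q3 [pp3 e3]].
  unfold Eq3. unfold k1, k2, k3 in *.
  rewrite <- (QP_iff _ _ _ _ q1 q2 pp1 pp2 e1 e2).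
  rewrite <- (QP_iff _ _ _ _ q2 q3 pp2 pp3 e2 e3).
  unfold Bvec, k1, k2, k3.
  set (w1 := kcoef m1 (m2 * m3) / vnorm (vsub p (bhat1 m1 m2 m3)) ^ 3).
  set (w2 := kcoef m2 (m3 * m1) / vnorm (vsub p (bhat2 m1 m2 m3)) ^ 3).
  set (w3 := kcoef m3 (m1 * m2) / vnorm (vsub p (bhat3 m1 m2 m3)) ^ 3).
  rewrite Eb1, Eb2, Eb3. unfold vadd, vscale, vzero; simpl.
  rewrite <- (lin_iff w1 w2 w3 m1 m2 m3 X2 Y2 X3 Y3 l1 l2 l3 hY2 hX hY).
  split.
  - intros h. injection h as hx hy hz. split; assumption.
  - intros [hx hy]. f_equal; try assumption. ring.
Qed.
From Coquelicot Require Import Coquelicot.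

Lemma der_term k p v b : 0 < Rd p b ->
  derivable_pt_lim (fun t => k / vnorm (vsub (vadd (vscale (cos t) p) (vscale (sin t) v)) b)) 0
    (k * (dot b v - dot p v) / vnorm (vsub p b) ^ 3).
Proof.
  intros hR. unfold Rd in hR.
  destruct p as [p1 p2 p3], v as [v1 v2 v3], b as [b1 b2 b3].
  unfold vnorm, dot, vsub, vadd, vscale in *; simpl in *.
  apply is_derive_Reals.
  set (D := (p1 - b1) * (p1 - b1) + (p2 - b2) * (p2 - b2) + (p3 - b3) * (p3 - b3)) in *.
  assert (eD : (cos 0 * p1 + sin 0 * v1 + - b1) * (cos 0 * p1 + sin 0 * v1 + - b1) +
       (cos 0 * p2 + sin 0 * v2 + - b2) * (cos 0 * p2 + sin 0 * v2 + - b2) +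
       (cos 0 * p3 + sin 0 * v3 + - b3) * (cos 0 * p3 + sin 0 * v3 + - b3) = D)
    by (rewrite cos_0, sin_0; unfold D; ring).
  assert (hr : 0 < sqrt D) by (apply sqrt_lt_R0; lra).
  auto_derive.
  - rewrite eD. split; [lra|split; [lra|exact I]].
  - rewrite eD. rewrite cos_0, sin_0.
    set (r := sqrt D) in *. field. lra.
Qed.

Lemma der_U m1 m2 m3 p v :
  0 < Rd p (bhat1 m1 m2 m3) -> 0 < Rd p (bhat2 m1 m2 m3) -> 0 < Rd p (bhat3 m1 m2 m3) ->
  derivable_pt_lim (fun t => Ustar m1 m2 m3 (vadd (vscale (cos t) p) (vscale (sin t) v))) 0
    (dot (Bvec m1 m2 m3 p) v -
     (k1 m1 m2 m3 / vnorm (vsub p (bhat1 m1 m2 m3)) ^ 3 + k2 m1 m2 m3 / vnorm (vsub p (bhat2 m1 m2 m3)) ^ 3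
      + k3 m1 m2 m3 / vnorm (vsub p (bhat3 m1 m2 m3)) ^ 3) * dot p v).
Proof.
  intros r1 r2 r3.
  pose proof (der_term (k1 m1 m2 m3) p v _ r1) as d1.
  pose proof (der_term (k2 m1 m2 m3) p v _ r2) as d2.
  pose proof (der_term (k3 m1 m2 m3) p v _ r3) as d3.
  pose proof (derivable_pt_lim_plus _ _ _ _ _ (derivable_pt_lim_plus _ _ _ _ _ d1 d2) d3) as d.
  unfold plus_fct in d. unfold Ustar.
  assert (n1 : 0 < vnorm (vsub p (bhat1 m1 m2 m3))) by (apply sqrt_lt_R0; exact r1).
  assert (n2 : 0 < vnorm (vsub p (bhat2 m1 m2 m3))) by (apply sqrt_lt_R0; exact r2).
  assert (n3 : 0 < vnorm (vsub p (bhat3 m1 m2 m3))) by (apply sqrt_lt_R0; exact r3).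
  match goal with |- derivable_pt_lim _ _ ?l => match type of d with derivable_pt_lim _ _ ?l' =>
    replace l with l' end end.
  - exact d.
  - unfold Bvec. 
    set (q1 := vnorm (vsub p (bhat1 m1 m2 m3))) in *.
    set (q2 := vnorm (vsub p (bhat2 m1 m2 m3))) in *.
    set (q3 := vnorm (vsub p (bhat3 m1 m2 m3))) in *.
    destruct p, v, (bhat1 m1 m2 m3), (bhat2 m1 m2 m3), (bhat3 m1 m2 m3).
    unfold dot, vadd, vscale; simpl. field. repeat split; lra.
Qed.

Lemma crit_iff m1 m2 m3 p : 0 < m1 -> 0 < m2 -> 0 < m3 -> m1 + m2 + m3 = 1 ->
  on_sphere p -> vz p <> 0 ->
  (sphere_critical (Ustar m1 m2 m3) p <-> Bvec m1 m2 m3 p = vzero).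
Proof.
  intros h1 h2 h3 hm hp hz.
  destruct (bhat_facts m1 m2 m3 h1 h2 h3 hm) as [X2 [Y2 [X3 [Y3 [Eb1 [Eb2 [Eb3 _]]]]]]].
  assert (ne : forall X Y, p <> mkV3 X Y 0) by (intros X Y e; rewrite e in hz; simpl in hz; lra).
  assert (r1 : 0 < Rd p (bhat1 m1 m2 m3)) by (apply Rd_pos; rewrite Eb1; apply ne).
  assert (r2 : 0 < Rd p (bhat2 m1 m2 m3)) by (apply Rd_pos; rewrite Eb2; apply ne).
  assert (r3 : 0 < Rd p (bhat3 m1 m2 m3)) by (apply Rd_pos; rewrite Eb3; apply ne).
  assert (Bz : vz (Bvec m1 m2 m3 p) = 0).
  { unfold Bvec. 
    set (w1 := k1 m1 m2 m3 / vnorm (vsub p (bhat1 m1 m2 m3)) ^ 3).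
    set (w2 := k2 m1 m2 m3 / vnorm (vsub p (bhat2 m1 m2 m3)) ^ 3).
    set (w3 := k3 m1 m2 m3 / vnorm (vsub p (bhat3 m1 m2 m3)) ^ 3).
    rewrite Eb1, Eb2, Eb3. simpl. ring. }
  set (S := k1 m1 m2 m3 / vnorm (vsub p (bhat1 m1 m2 m3)) ^ 3 + k2 m1 m2 m3 / vnorm (vsub p (bhat2 m1 m2 m3)) ^ 3
      + k3 m1 m2 m3 / vnorm (vsub p (bhat3 m1 m2 m3)) ^ 3).
  split.
  - intros hc.
    destruct (Bvec m1 m2 m3 p) as [Bx By Bz'] eqn:EB. simpl in Bz. subst Bz'.
    destruct p as [px py pz]. simpl in hz. unfold on_sphere, dot in hp; simpl in hp.
    destruct (Req_dec (Bx * Bx + By * By) 0) as [e|e].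
    + assert (Bx = 0) by nra. assert (By = 0) by nra. subst. reflexivity.
    + exfalso.
      set (w := mkV3 Bx By (- (Bx * px + By * py) / pz)).
      assert (hww : Bx * Bx + By * By <= dot w w).
      { unfold w, dot; simpl. pose proof (Rle_0_sqr (- (Bx * px + By * py) / pz)). unfold Rsqr in *. lra. }
      assert (hwp : 0 < dot w w) by nra.
      set (n := vnorm w).
      assert (hn : 0 < n) by (apply sqrt_lt_R0; exact hwp).
      assert (hn2 : n * n = dot w w) by (apply sqrt_sqrt; lra).
      set (v := vscale (/ n) w).
      assert (hvp : dot v (mkV3 px py pz) = 0).
      { unfold v, w, vscale, dot; simpl. field. split; lra. }
      assert (hvv : dot v v = 1).
      { unfold v, vscale. transitivity (dot w w / (n * n)).
        - unfold w, dot; simpl. field. lra.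
        - rewrite hn2. field. lra. }
      pose proof (hc v hvp hvv) as d0.
      pose proof (der_U m1 m2 m3 (mkV3 px py pz) v r1 r2 r3) as d1.
      pose proof (uniqueness_limite _ _ _ _ d0 d1) as eq.
      rewrite EB in eq. fold S in eq.
      assert (dot v (mkV3 px py pz) = dot (mkV3 px py pz) v) by (unfold dot; ring).
      rewrite <- H, hvp in eq.
      assert (dot (mkV3 Bx By 0) v = (Bx * Bx + By * By) / n).
      { unfold v, w, vscale, dot; simpl. field. lra. }
      rewrite H0 in eq.
      assert (0 < (Bx * Bx + By * By) / n).
      { apply Rdiv_lt_0_compat; [|lra]. assert (0 <= Bx * Bx) by nra. assert (0 <= By * By) by nra. lra. }
      lra.
  - intros hB v hvp hvv.
    pose proof (der_U m1 m2 m3 p v r1 r2 r3) as d1.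
    rewrite hB in d1. fold S in d1.
    assert (dot p v = 0) by (rewrite <- hvp; unfold dot; ring).
    rewrite H in d1. unfold dot, vzero in d1; simpl in d1.
    replace (0 * vx v + 0 * vy v + 0 * vz v - S * 0) with 0 in d1 by ring. exact d1.
Qed.

Definition ceq (m1 m2 m3 h : R) : Config :=
  let l := / sqrt (4 * (m1 * m2 + m2 * m3 + m3 * m1)) in
  let gx := 2 * m2 + m3 in let gy := m3 * h in
  mkConfig (l * (0 - gx)) (l * (0 - gy)) (l * (2 - gx)) (l * (0 - gy)) (l * (1 - gx)) (l * (h - gy)).

Lemma ceq_ok m1 m2 m3 h : 0 < m1 -> 0 < m2 -> 0 < m3 -> m1 + m2 + m3 = 1 -> h * h = 3 ->
  equilateral_shape m1 m2 m3 (shape m1 m2 m3 (ceq m1 m2 m3 h)) /\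
  vz (shape m1 m2 m3 (ceq m1 m2 m3 h)) * h < 0.
Proof.
  intros h1 h2 h3 hm hh.
  assert (hsig : 0 < 4 * (m1 * m2 + m2 * m3 + m3 * m1)).
  { assert (0 < m1 * m2) by nra. assert (0 < m2 * m3) by nra. assert (0 < m3 * m1) by nra. lra. }
  pose proof (inv_sqrt_sq _ hsig) as hl.
  assert (hl0 : 0 < / sqrt (4 * (m1 * m2 + m2 * m3 + m3 * m1)))
    by (apply Rinv_0_lt_compat, sqrt_lt_R0; exact hsig).
  assert (hc : COM m1 m2 m3 (ceq m1 m2 m3 h)).
  { unfold COM, ceq; simpl.
    set (l := / sqrt (4 * (m1 * m2 + m2 * m3 + m3 * m1))). clearbody l.
    split.
    - transitivity (l * (2 * m2 + m3) * (1 - (m1 + m2 + m3))); [ring| rewrite hm; ring].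
    - transitivity (l * (m3 * h) * (1 - (m1 + m2 + m3))); [ring| rewrite hm; ring]. }
  split.
  - exists (ceq m1 m2 m3 h). split; [|split; [|reflexivity]].
    + destruct hc as [cx cy]. split; [exact cx| split; [exact cy|]].
      unfold ceq; simpl.
      set (l := / sqrt (4 * (m1 * m2 + m2 * m3 + m3 * m1))) in *. clearbody l.
      transitivity ((l * l) * (4 * m2 + m3 + m3 * (h * h) - (2 * m2 + m3) ^ 2 - m3 ^ 2 * (h * h)
         + (m1 + m2 + m3 - 1) * ((2 * m2 + m3) ^ 2 + (m3 * h) ^ 2))); [ring|].
      replace (4 * m2 + m3 + m3 * (h * h) - (2 * m2 + m3) ^ 2 - m3 ^ 2 * (h * h)
         + (m1 + m2 + m3 - 1) * ((2 * m2 + m3) ^ 2 + (m3 * h) ^ 2)) with (4 * (m1 * m2 + m2 * m3 + m3 * m1)).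
      * rewrite hl. field. lra.
      * rewrite hh. assert (em : m1 = 1 - m2 - m3) by lra. rewrite em. ring.
    + unfold equilateral, ceq; simpl.
      set (l := / sqrt (4 * (m1 * m2 + m2 * m3 + m3 * m1))) in *. clearbody l.
      split.
      * transitivity (l * l * 4); [ring|].
        transitivity (l * l * (1 + h * h)); [rewrite hh; ring| ring].
      * ring.
  - rewrite shape_form by exact hc. cbv zeta. unfold ceq; simpl.
    set (l := / sqrt (4 * (m1 * m2 + m2 * m3 + m3 * m1))) in *. clearbody l.
    assert (0 < / sqrt (m1 * (1 - m1))) by (apply Rinv_0_lt_compat, sqrt_lt_R0; nra).
    assert (0 < / sqrt (m2 * m3 * (1 - m1))) by
      (apply Rinv_0_lt_compat, sqrt_lt_R0; assert (0 < m2 * m3) by nra; nra).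
    set (t := / sqrt (m1 * (1 - m1))) in *. set (s := / sqrt (m2 * m3 * (1 - m1))) in *.
    clearbody t s.
    match goal with |- ?a < 0 => replace a with (- (4 * (t * s) * (m1 * m2 * m3) * (l * l) * (m2 + m3) * (h * h))) by ring end.
    rewrite hh.
    assert (0 < t * s) by nra. assert (0 < m1 * m2 * m3) by (assert (0 < m1 * m2) by nra; nra).
    assert (0 < l * l) by nra.
    assert (0 < (t * s) * (m1 * m2 * m3)) by nra.
    assert (0 < (t * s) * (m1 * m2 * m3) * (l * l)) by nra.
    assert (0 < (t * s) * (m1 * m2 * m3) * (l * l) * (m2 + m3)) by nra.
    nra.
Qed.

Lemma bnorm m1 m2 m3 : 0 < m1 -> 0 < m2 -> 0 < m3 -> m1 + m2 + m3 = 1 ->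
  dot (bhat1 m1 m2 m3) (bhat1 m1 m2 m3) = 1 /\ dot (bhat2 m1 m2 m3) (bhat2 m1 m2 m3) = 1 /\
  dot (bhat3 m1 m2 m3) (bhat3 m1 m2 m3) = 1.
Proof.
  intros h1 h2 h3 hm.
  destruct (coll1_ok m1 m2 m3 h1 h2 h3 hm) as [c1 n1].
  destruct (coll2_ok m1 m2 m3 h1 h2 h3 hm) as [c2 n2].
  destruct (coll3_ok m1 m2 m3 h1 h2 h3 hm) as [c3 n3].
  unfold bhat1, bhat2, bhat3. rewrite !L_sphere by assumption.
  rewrite n1, n2, n3. repeat split; ring.
Qed.

Lemma xy_det m1 m2 m3 p : 0 < m1 -> 0 < m2 -> 0 < m3 -> m1 + m2 + m3 = 1 ->
  on_sphere p -> Eq3 m1 m2 m3 p ->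
  forall X2 Y2 X3 Y3,
    bhat1 m1 m2 m3 = mkV3 1 0 0 -> bhat2 m1 m2 m3 = mkV3 X2 Y2 0 ->
    bhat3 m1 m2 m3 = mkV3 X3 Y3 0 ->
    (1 - m1) + (1 - m2) * X2 + (1 - m3) * X3 = 0 ->
    (1 - m2) * Y2 + (1 - m3) * Y3 = 0 ->
    vx p = 1 - (4 * (m2 * m3) / (1 - m1)) / (2 * (m1 * m2 + m2 * m3 + m3 * m1)) /\
    X2 * vx p + Y2 * vy p = 1 - (4 * (m3 * m1) / (1 - m2)) / (2 * (m1 * m2 + m2 * m3 + m3 * m1)).
Proof.
  intros h1 h2 h3 hm hp hE X2 Y2 X3 Y3 Eb1 Eb2 Eb3 hX hY.
  destruct (bnorm m1 m2 m3 h1 h2 h3 hm) as [_ [nb2 nb3]].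
  rewrite Eb2 in nb2. rewrite Eb3 in nb3. unfold dot in nb2, nb3; simpl in nb2, nb3.
  unfold Eq3 in hE. rewrite Eb1, Eb2, Eb3 in hE.
  destruct p as [px py pz]. unfold on_sphere, dot in hp; simpl in hp. simpl.
  unfold Rd, dot, vsub in hE; simpl in hE.
  assert (d1 : (px - 1) * (px - 1) + (py - 0) * (py - 0) + (pz - 0) * (pz - 0) = 2 - 2 * px) by nra.
  assert (d2 : (px - X2) * (px - X2) + (py - Y2) * (py - Y2) + (pz - 0) * (pz - 0) = 2 - 2 * (X2 * px + Y2 * py)) by nra.
  assert (d3 : (px - X3) * (px - X3) + (py - Y3) * (py - Y3) + (pz - 0) * (pz - 0) = 2 - 2 * (X3 * px + Y3 * py)) by nra.
  rewrite d1, d2, d3 in hE. destruct hE as [e12 e23].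
  assert (l1 : m1 < 1) by lra. assert (l2 : m2 < 1) by lra. assert (l3 : m3 < 1) by lra.
  assert (p12 : 0 < m1 * m2) by nra. assert (p23 : 0 < m2 * m3) by nra. assert (p31 : 0 < m3 * m1) by nra.
  set (mu := (2 - 2 * px) / (4 * (m2 * m3) / (1 - m1))) in *.
  assert (D1 : 2 - 2 * px = mu * (4 * (m2 * m3) / (1 - m1))) by (unfold mu; field; lra).
  assert (D2 : 2 - 2 * (X2 * px + Y2 * py) = mu * (4 * (m3 * m1) / (1 - m2))) by (rewrite e12; field; lra).
  assert (D3 : 2 - 2 * (X3 * px + Y3 * py) = mu * (4 * (m1 * m2) / (1 - m3))) by (rewrite e12, e23; field; lra).
  assert (hsum : (1 - m1) * (2 - 2 * px) + (1 - m2) * (2 - 2 * (X2 * px + Y2 * py))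
                 + (1 - m3) * (2 - 2 * (X3 * px + Y3 * py)) = 4).
  { replace ((1 - m1) * (2 - 2 * px) + (1 - m2) * (2 - 2 * (X2 * px + Y2 * py))
                 + (1 - m3) * (2 - 2 * (X3 * px + Y3 * py))) with
      (2 * (3 - (m1 + m2 + m3)) - 2 * px * ((1 - m1) + (1 - m2) * X2 + (1 - m3) * X3)
       - 2 * py * ((1 - m2) * Y2 + (1 - m3) * Y3)) by ring.
    rewrite hX, hY, hm. ring. }
  rewrite D1, D2, D3 in hsum.
  assert (hmu : mu = 1 / (m1 * m2 + m2 * m3 + m3 * m1)).
  { replace ((1 - m1) * (mu * (4 * (m2 * m3) / (1 - m1))) + (1 - m2) * (mu * (4 * (m3 * m1) / (1 - m2))) +
       (1 - m3) * (mu * (4 * (m1 * m2) / (1 - m3)))) with (4 * mu * (m1 * m2 + m2 * m3 + m3 * m1)) in hsum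
      by (field; lra).
    apply Rmult_eq_reg_l with (4 * (m1 * m2 + m2 * m3 + m3 * m1)); [|lra].
    rewrite <- (Rmult_comm mu), <- Rmult_assoc. replace (mu * 4) with (4 * mu) by ring.
    rewrite hsum. field. lra. }
  rewrite hmu in D1, D2. split.
  - apply Rmult_eq_reg_l with 2; [|lra]. 
    replace (2 * px) with (2 - (2 - 2 * px)) by ring. rewrite D1. field. lra.
  - apply Rmult_eq_reg_l with 2; [|lra].
    replace (2 * (X2 * px + Y2 * py)) with (2 - (2 - 2 * (X2 * px + Y2 * py))) by ring. rewrite D2. field. lra.
Qed.

Theorem mainTheorem18 (m1 m2 m3 : R) :
  0 < m1 -> 0 < m2 -> 0 < m3 -> m1 + m2 + m3 = 1 ->
  (exists p0plus p0minus : V3,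
      0 < vz p0plus /\ vz p0minus < 0 /\
      (forall p, equilateral_shape m1 m2 m3 p <-> p = p0plus \/ p = p0minus)) /\
  (forall p : V3, on_sphere p -> vz p <> 0 ->
      (sphere_critical (Ustar m1 m2 m3) p <-> equilateral_shape m1 m2 m3 p)) /\
  (forall p : V3, on_sphere p ->
      p <> bhat1 m1 m2 m3 -> p <> bhat2 m1 m2 m3 -> p <> bhat3 m1 m2 m3 ->
      (Bvec m1 m2 m3 p = vzero <-> equilateral_shape m1 m2 m3 p)).
Proof.
  intros h1 h2 h3 hm.
  destruct (bhat_facts m1 m2 m3 h1 h2 h3 hm) as [X2 [Y2 [X3 [Y3 [Eb1 [Eb2 [Eb3 [hY2 [hX hY]]]]]]]]].
  split; [|split].
  - set (h := sqrt 3).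
    assert (hh : h * h = 3) by (apply sqrt_sqrt; lra).
    assert (hpos : 0 < h) by (apply sqrt_lt_R0; lra).
    destruct (ceq_ok m1 m2 m3 (- h) h1 h2 h3 hm ltac:(nra)) as [ep sp].
    destruct (ceq_ok m1 m2 m3 h h1 h2 h3 hm hh) as [em sm].
    set (pp := shape m1 m2 m3 (ceq m1 m2 m3 (- h))) in *.
    set (pm := shape m1 m2 m3 (ceq m1 m2 m3 h)) in *.
    assert (zp : 0 < vz pp) by nra.
    assert (zm : vz pm < 0) by nra.
    exists pp, pm. split; [exact zp|]. split; [exact zm|].
    intros q. split.
    + intros eq.
      assert (key : forall a b, equilateral_shape m1 m2 m3 a -> equilateral_shape m1 m2 m3 b ->
                vx a = vx b /\ vy a = vy b /\ vz a * vz a = vz b * vz b).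
      { intros a b ea eb.
        apply (eqshape_iff m1 m2 m3 a h1 h2 h3 hm) in ea. destruct ea as [sa Ea].
        apply (eqshape_iff m1 m2 m3 b h1 h2 h3 hm) in eb. destruct eb as [sb Eb].
        destruct (xy_det m1 m2 m3 a h1 h2 h3 hm sa Ea X2 Y2 X3 Y3 Eb1 Eb2 Eb3 hX hY) as [xa ya].
        destruct (xy_det m1 m2 m3 b h1 h2 h3 hm sb Eb X2 Y2 X3 Y3 Eb1 Eb2 Eb3 hX hY) as [xb yb].
        assert (ex : vx a = vx b) by lra.
        assert (ey : vy a = vy b).
        { rewrite ex in ya. apply Rmult_eq_reg_l with Y2; [|exact hY2]. lra. }
        split; [exact ex| split; [exact ey|]].
        unfold on_sphere, dot in sa, sb. rewrite ex, ey in sa. lra. }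
      destruct (key q pp eq ep) as [x1 [y1 z1]].
      destruct (key pm pp em ep) as [x2 [y2 z2]].
      assert (vz q = vz pp \/ vz q = - vz pp) as [e|e].
      { assert ((vz q - vz pp) * (vz q + vz pp) = 0) by nra.
        apply Rmult_integral in H. destruct H; [left|right]; lra. }
      * left. destruct q, pp; simpl in *; subst; reflexivity.
      * right. assert (vz pm = - vz pp).
        { assert ((vz pm - vz pp) * (vz pm + vz pp) = 0) by nra.
          apply Rmult_integral in H. destruct H; lra. }
        destruct q, pm, pp; simpl in *; subst. f_equal; lra.
    + intros [e|e]; subst q; assumption.
  - intros p hp hz.
    assert (ne : forall X Y, p <> mkV3 X Y 0) by (intros X Y e; rewrite e in hz; simpl in hz; lra).
    rewrite (crit_iff m1 m2 m3 p h1 h2 h3 hm hp hz).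
    rewrite (B_iff m1 m2 m3 p h1 h2 h3 hm); [| rewrite Eb1; apply ne | rewrite Eb2; apply ne | rewrite Eb3; apply ne].
    rewrite (eqshape_iff m1 m2 m3 p h1 h2 h3 hm). tauto.
  - intros p hp n1 n2 n3.
    rewrite (B_iff m1 m2 m3 p h1 h2 h3 hm n1 n2 n3).
    rewrite (eqshape_iff m1 m2 m3 p h1 h2 h3 hm). tauto.
Qed.
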